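(* Let $i \in \mathbb{N}_0$. (i) Suppose that the mesh $\mathcal{T}_h$ satisfies the angle condition $\int_\Omega \nabla\varphi_{z}\cdot\nabla\varphi_{z'} \leq 0$ for all vertices $z \neq z'$. The approximations generated by the tangent plane scheme satisfy the discrete energy law \[ \mathcal{J}_h(\boldsymbol{m}_h^{i+1},\boldsymbol{v}_h^{i+1}) + \alpha k \|\boldsymbol{v}_h^{i+1}\|_h^2 + \frac{\tau k^2}{2} \|d_t \boldsymbol{v}_h^{i+1}\|_h^2 + \frac{k^2}{2} \|\nabla\boldsymbol{v}_h^{i+1}\|_{\boldsymbol{L}^2(\Omega)}^2 \leq \mathcal{J}_h(\boldsymbol{m}_h^i,\boldsymbol{v}_h^i). \] (ii) The approximations generated by the nonlinear angular momentum method satisfy the discrete energy law \[ \mathcal{J}_h(\boldsymbol{m}_h^{i+1},\boldsymbol{w}_h^{i+1}) + \alpha k \|d_t\boldsymbol{m}_h^{i+1}\|_h^2 = \mathcal{J}_h(\boldsymbol{m}_h^i,\boldsymbol{w}_h^i). \] (iii) The approximations generated by the linearized angular momentum method satisfy the discrete energy law \[ \mathcal{J}_h(\boldsymbol{m}_h^{i+1},\boldsymbol{w}_h^{i+1}) + \alpha k \|d_t\boldsymbol{m}_h^{i+1}\|_h^2 + k \big(\boldsymbol{m}_h^{i+1/2} \times \boldsymbol{r}_h^i, \mathcal{P}_h\boldsymbol{h}_{\mathrm{eff}}[\boldsymbol{m}_h^{i+1/2}] - \alpha \, d_t\boldsymbol{m}_h^{i+1}\big)_h = \mathcal{J}_h(\boldsymbol{m}_h^i,\boldsymbol{w}_h^i).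 \]
   Context: Setting: $\Omega\subset\mathbb{R}^d$ ($d=2,3$) is a bounded polytopal Lipschitz domain; $\alpha>0$, $\tau>0$ are constants (Gilbert damping and angular momentum relaxation time) of the inertial Landau–Lifshitz–Gilbert equation $\partial_t\boldsymbol{m} = -\boldsymbol{m}\times(\boldsymbol{h}_{\mathrm{eff}}[\boldsymbol{m}] - \alpha\partial_t\boldsymbol{m} - \tau\partial_{tt}\boldsymbol{m})$. The energy is $\mathcal{E}[\boldsymbol{m}] = \frac12\|\nabla\boldsymbol{m}\|_{\boldsymbol{L}^2(\Omega)}^2$ and the effective field is defined by $-\langle\boldsymbol{h}_{\mathrm{eff}}[\boldsymbol{m}],\boldsymbol{\phi}\rangle = (\nabla\boldsymbol{m},\nabla\boldsymbol{\phi})$ (an element of the dual of $\boldsymbol{H}^1(\Omega)$). Discretization: $k>0$ is a uniform time-step, $d_t\phi^{i+1} := (\phi^{i+1}-\phi^i)/k$, $\phi^{i+1/2} := (\phi^{i+1}+\phi^i)/2$. $\mathcal{T}_h$ is a shape-regular simplicial mesh of $\Omega$ with vertex set $\mathcal{N}_h$, $\mathcal{S}^1(\mathcal{T}_h)$ the space of continuous piecewise affine functions with nodal hat basis $\{\varphi_z\}_{z\in\mathcal{N}_h}$, $\mathcal{I}_h$ the (vector-valued) nodal interpolant. The mass-lumped product is $(\boldsymbol{\psi},\boldsymbol{\phi})_h = \int_\Omega \mathcal{I}_h[\boldsymbol{\psi}\cdot\boldsymbol{\phi}]$ with induced norm $\|\cdot\|_h$. The map $\mathcal{P}_h$ from the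 dual of $\boldsymbol{H}^1(\Omega)$ to $\mathcal{S}^1(\mathcal{T}_h)^3$ is defined by $(\mathcal{P}_h\boldsymbol{u},\boldsymbol{\phi}_h)_h = \langle\boldsymbol{u},\boldsymbol{\phi}_h\rangle$ for all $\boldsymbol{\phi}_h\in\mathcal{S}^1(\mathcal{T}_h)^3$. Let $\mathcal{M}_h := \{\boldsymbol{\phi}_h\in\mathcal{S}^1(\mathcal{T}_h)^3 : |\boldsymbol{\phi}_h(z)|=1 \ \forall z\in\mathcal{N}_h\}$ and, for $\boldsymbol{\psi}_h\in\mathcal{S}^1(\mathcal{T}_h)^3$, $\mathcal{K}_h[\boldsymbol{\psi}_h] := \{\boldsymbol{\phi}_h\in\mathcal{S}^1(\mathcal{T}_h)^3 : \boldsymbol{\psi}_h(z)\cdot\boldsymbol{\phi}_h(z)=0 \ \forall z\in\mathcal{N}_h\}$. The discrete total energy is $\mathcal{J}_h(\boldsymbol{m}_h,\boldsymbol{u}_h) = \mathcal{E}[\boldsymbol{m}_h] + \frac{\tau}{2}\|\boldsymbol{u}_h\|_h^2$. All algorithms start from $\boldsymbol{m}_h^0\in\mathcal{M}_h$, $\boldsymbol{v}_h^0\in\mathcal{K}_h[\boldsymbol{m}_h^0]$. Tangent plane scheme: for each $i$, compute $\boldsymbol{v}_h^{i+1}\in\mathcal{K}_h[\boldsymbol{m}_h^i]$ such that for all $\boldsymbol{\phi}_h\in\mathcal{K}_h[\boldsymbol{m}_h^i]$: $\tau(d_t\boldsymbol{v}_h^{i+1},\boldsymbol{\phi}_h)_h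 + \alpha(\boldsymbol{v}_h^{i+1},\boldsymbol{\phi}_h)_h + (\boldsymbol{m}_h^i\times\boldsymbol{v}_h^{i+1},\boldsymbol{\phi}_h)_h - k(\mathcal{P}_h\boldsymbol{h}_{\mathrm{eff}}[\boldsymbol{v}_h^{i+1}],\boldsymbol{\phi}_h)_h = (\mathcal{P}_h\boldsymbol{h}_{\mathrm{eff}}[\boldsymbol{m}_h^i],\boldsymbol{\phi}_h)_h$; then set $\boldsymbol{m}_h^{i+1} = \mathcal{I}_h[(\boldsymbol{m}_h^i + k\boldsymbol{v}_h^{i+1})/|\boldsymbol{m}_h^i + k\boldsymbol{v}_h^{i+1}|]$. Nonlinear angular momentum method: set $\boldsymbol{w}_h^0 = \mathcal{I}_h[\boldsymbol{m}_h^0\times\boldsymbol{v}_h^0]$; for each $i$, find $(\boldsymbol{m}_h^{i+1},\boldsymbol{w}_h^{i+1})\in\mathcal{M}_h\times\mathcal{K}_h[\boldsymbol{m}_h^{i+1}]$ such that for all $\boldsymbol{\phi}_h,\boldsymbol{\psi}_h\in\mathcal{S}^1(\mathcal{T}_h)^3$: $(d_t\boldsymbol{m}_h^{i+1},\boldsymbol{\phi}_h)_h = -(\boldsymbol{m}_h^{i+1/2}\times\boldsymbol{w}_h^{i+1/2},\boldsymbol{\phi}_h)_h$ and $\tau(d_t\boldsymbol{w}_h^{i+1},\boldsymbol{\psi}_h)_h = (\boldsymbol{m}_h^{i+1/2}\times\mathcal{P}_h\boldsymbol{h}_{\mathrm{eff}}[\boldsymbol{m}_h^{i+1/2}],\boldsymbol{\psi}_h)_h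 - \alpha(\boldsymbol{m}_h^{i+1/2}\times d_t\boldsymbol{m}_h^{i+1},\boldsymbol{\psi}_h)_h - (\boldsymbol{m}_h^{i+1/2}\times\boldsymbol{w}_h^{i+1/2},\boldsymbol{\psi}_h)_h$. Linearized angular momentum method: same initialization of $\boldsymbol{w}_h^0$; for each $i$, set $\boldsymbol{u}_h^{i,0}=\boldsymbol{m}_h^i$, $\boldsymbol{z}_h^{i,0}=\boldsymbol{w}_h^i$ and for $\ell\in\mathbb{N}_0$ compute $\boldsymbol{u}_h^{i,\ell+1}\in\mathcal{S}^1(\mathcal{T}_h)^3$ with $2(\boldsymbol{u}_h^{i,\ell+1},\boldsymbol{\phi}_h)_h + k(\boldsymbol{u}_h^{i,\ell+1}\times\boldsymbol{z}_h^{i,\ell},\boldsymbol{\phi}_h)_h = 2(\boldsymbol{m}_h^i,\boldsymbol{\phi}_h)_h$ for all $\boldsymbol{\phi}_h$, then $\boldsymbol{z}_h^{i,\ell+1}\in\mathcal{S}^1(\mathcal{T}_h)^3$ with $2\tau(\boldsymbol{z}_h^{i,\ell+1},\boldsymbol{\psi}_h)_h + k(\boldsymbol{u}_h^{i,\ell+1}\times\boldsymbol{z}_h^{i,\ell+1},\boldsymbol{\psi}_h)_h = k(\boldsymbol{u}_h^{i,\ell+1}\times\mathcal{P}_h\boldsymbol{h}_{\mathrm{eff}}[\boldsymbol{u}_h^{i,\ell+1}],\boldsymbol{\psi}_h)_h + 2\alpha(\boldsymbol{u}_h^{i,\ell+1}\times\boldsymbol{m}_h^i,\boldsymbol{\psi}_h)_h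 + 2\tau(\boldsymbol{w}_h^i,\boldsymbol{\psi}_h)_h$ for all $\boldsymbol{\psi}_h$, until $\|\boldsymbol{u}_h^{i,\ell+1}-\boldsymbol{u}_h^{i,\ell}\|_h + \|\boldsymbol{z}_h^{i,\ell+1}-\boldsymbol{z}_h^{i,\ell}\|_h\le\varepsilon$; with $\ell_i$ the first index meeting this, set $\boldsymbol{m}_h^{i+1} = 2\boldsymbol{u}_h^{i,\ell_i+1}-\boldsymbol{m}_h^i$, $\boldsymbol{w}_h^{i+1} = 2\boldsymbol{z}_h^{i,\ell_i+1}-\boldsymbol{w}_h^i$, and $\boldsymbol{r}_h^i := \boldsymbol{z}_h^{i,\ell_i+1}-\boldsymbol{z}_h^{i,\ell_i}$ (so $\|\boldsymbol{r}_h^i\|_h\le\varepsilon$). *)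

(* Defs.v *)
From HB Require Import structures.
From mathcomp Require Import all_boot all_order all_algebra.
From mathcomp Require Import reals.
Set Implicit Arguments.
Unset Strict Implicit.
Unset Printing Implicit Defensive.
Import Order.TTheory GRing.Theory Num.Theory.
Local Open Scope ring_scope.

Record mesh (R : realType) (d : nat) := Mesh {
  nV : nat;
  nT : nat;
  coord : 'I_nV -> 'rV[R]_d;
  elt : 'I_nT -> 'I_d.+1 -> 'I_nV }.
Arguments nV {R d} _.
Arguments nT {R d} _.
Arguments coord {R d} _ _.
Arguments elt {R d} _ _ _.

Section MeshDefs.
Variables (R : realType) (d : nat) (M : mesh R d).

Definition vtx := 'I_(nV M).
Definition simp := 'I_(nT M).

Definition edge_mx (T : simp) : 'M[R]_d :=
  \matrix_(j < d, l < d)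
    (coord M (elt M T (lift ord0 j)) - coord M (elt M T ord0)) ord0 l.

Definition vol (T : simp) : R := `|\det (edge_mx T)| / (d`!)%:R.

Definition vset (T : simp) : {set vtx} := [set elt M T j | j : 'I_d.+1].

(* gradient of the hat function phi_z restricted to T: the unique g with
   g . (p_{j+1} - p_0) = phi_z(p_{j+1}) - phi_z(p_0) *)
Definition grad_hat (T : simp) (z : vtx) : 'rV[R]_d :=
  (\row_(j < d) (((elt M T (lift ord0 j) == z) : nat)%:R
                 - ((elt M T ord0 == z) : nat)%:R))
  *m (invmx (edge_mx T))^T.

(* stiffness entry  \int_Omega grad phi_z . grad phi_z'  *)
Definition stiff (z z' : vtx) : R :=
  \sum_(T : simp) vol T * (grad_hat T z *m (grad_hat T z')^T) ord0 ord0.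

(* lumped weight  \int_Omega phi_z = sum_{T containing z} |T|/(d+1) *)
Definition lweight (z : vtx) : R :=
  \sum_(T : simp | z \in vset T) vol T / (d.+1)%:R.

Definition in_hull (T : simp) (x : 'rV[R]_d) : Prop :=
  exists lam : 'I_d.+1 -> R,
    [/\ forall j, 0 <= lam j, \sum_j lam j = 1
      & x = \sum_j lam j *: coord M (elt M T j)].

Definition shared_hull (T T' : simp) (x : 'rV[R]_d) : Prop :=
  exists lam : vtx -> R,
    [/\ forall z, 0 <= lam z,
        forall z, lam z != 0 -> z \in vset T :&: vset T',
        \sum_z lam z = 1
      & x = \sum_z lam z *: coord M z].

Definition conforming_mesh : Prop :=
  [/\ injective (coord M),
      forall T, \det (edge_mx T) != 0,
      forall z, exists T, z \in vset T,
      forall T T', vset T = vset T' -> T = T'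
    & forall T T', T != T' ->
        forall x, (in_hull T x /\ in_hull T' x) <-> shared_hull T T' x].

Definition angle_condition : Prop :=
  forall z z' : vtx, z != z' -> stiff z z' <= 0.

(* Vector calculus in R^3 and discrete fields S^1(T_h)^3, represented  *)
(* by their nodal values.                                              *)
Definition vdot (a b : 'rV[R]_3) : R := (a *m b^T) ord0 ord0.
Definition vnorm (a : 'rV[R]_3) : R := Num.sqrt (vdot a a).
Definition vcross (a b : 'rV[R]_3) : 'rV[R]_3 :=
  let a0 := a ord0 (inord 0) in let a1 := a ord0 (inord 1) in
  let a2 := a ord0 (inord 2) in
  let b0 := b ord0 (inord 0) in let b1 := b ord0 (inord 1) in
  let b2 := b ord0 (inord 2) in
  \row_(i < 3) [:: a1 * b2 - a2 * b1; a2 * b0 - a0 * b2;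
                   a0 * b1 - a1 * b0]`_i.

Definition fe := {ffun vtx -> 'rV[R]_3}.

(* nodal interpolant of the pointwise cross product *)
Definition fcross (u v : fe) : fe := [ffun z => vcross (u z) (v z)].

(* mass-lumped product (psi, phi)_h = \int I_h[psi . phi] and its norm *)
Definition lip (u v : fe) : R := \sum_z lweight z * vdot (u z) (v z).
Definition lnorm (u : fe) : R := Num.sqrt (lip u u).

Definition gradip (u v : fe) : R :=
  \sum_z \sum_z' stiff z z' * vdot (u z) (v z').

Definition energy (u : fe) : R := gradip u u / 2.

(* P_h h_eff[u]: (P_h h_eff[u], phi)_h = -(grad u, grad phi) *)
Definition Ph_heff (u : fe) : fe :=
  [ffun z => - ((lweight z)^-1 *: \sum_z' stiff z z' *: u z')].

Definition Jh (tau : R) (m u : fe) : R := energy m + tau / 2 * lnorm u ^+ 2.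

Definition inMh (m : fe) : Prop := forall z, vnorm (m z) = 1.
Definition inKh (m phi : fe) : Prop := forall z, vdot (m z) (phi z) = 0.

Definition dt (k : R) (a b : fe) : fe := k^-1 *: (a - b).
Definition mid (a b : fe) : fe := 2^-1 *: (a + b).

Definition tps_generated (alpha tau k : R) (m v : nat -> fe) : Prop :=
  inMh (m 0%N) /\ inKh (m 0%N) (v 0%N) /\
  forall i : nat,
    [/\ inKh (m i) (v i.+1),
        forall phi, inKh (m i) phi ->
          tau * lip (dt k (v i.+1) (v i)) phi + alpha * lip (v i.+1) phi
          + lip (fcross (m i) (v i.+1)) phi - k * lip (Ph_heff (v i.+1)) phi
          = lip (Ph_heff (m i)) phi
      & m i.+1 = [ffun z => (vnorm (m i z + k *: v i.+1 z))^-1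
                              *: (m i z + k *: v i.+1 z)]].

Definition amm_generated (alpha tau k : R) (v0 : fe) (m w : nat -> fe) : Prop :=
  inMh (m 0%N) /\ inKh (m 0%N) v0 /\ w 0%N = fcross (m 0%N) v0 /\
  forall i : nat,
    let mh := mid (m i.+1) (m i) in
    let wh := mid (w i.+1) (w i) in
    [/\ inMh (m i.+1), inKh (m i.+1) (w i.+1),
        forall phi, lip (dt k (m i.+1) (m i)) phi = - lip (fcross mh wh) phi
      & forall psi,
          tau * lip (dt k (w i.+1) (w i)) psi
          = lip (fcross mh (Ph_heff mh)) psi
            - alpha * lip (fcross mh (dt k (m i.+1) (m i))) psi
            - lip (fcross mh wh) psi].

(* linearized angular momentum method with fixed-point iterates u i l,
   z i l and stopping indices ell i *)
Definition lamm_generated (alpha tau k eps : R) (v0 : fe) (m w : nat -> fe)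
    (u z : nat -> nat -> fe) (ell : nat -> nat) : Prop :=
  inMh (m 0%N) /\ inKh (m 0%N) v0 /\ w 0%N = fcross (m 0%N) v0 /\
  forall i : nat,
    [/\ u i 0%N = m i /\ z i 0%N = w i,
        forall l : nat, (l <= ell i)%N ->
          (forall phi, 2 * lip (u i l.+1) phi + k * lip (fcross (u i l.+1) (z i l)) phi
                       = 2 * lip (m i) phi) /\
          (forall psi, 2 * tau * lip (z i l.+1) psi
                       + k * lip (fcross (u i l.+1) (z i l.+1)) psi
                       = k * lip (fcross (u i l.+1) (Ph_heff (u i l.+1))) psi
                         + 2 * alpha * lip (fcross (u i l.+1) (m i)) psi
                         + 2 * tau * lip (w i) psi),
        lnorm (u i (ell i).+1 - u i (ell i)) + lnorm (z i (ell i).+1 - z i (ell i)) <= eps,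
        forall l : nat, (l < ell i)%N ->
          eps < lnorm (u i l.+1 - u i l) + lnorm (z i l.+1 - z i l)
      & m i.+1 = 2%:R *: u i (ell i).+1 - m i /\ w i.+1 = 2%:R *: z i (ell i).+1 - w i].

Definition lamm_residual (z : nat -> nat -> fe) (ell : nat -> nat) (i : nat) : fe :=
  z i (ell i).+1 - z i (ell i).

End MeshDefs.

(* Main.v *)
Require Import Defs.
From HB Require Import structures.
From mathcomp Require Import all_boot all_order all_algebra.
From mathcomp Require Import reals.
From mathcomp Require Import ring lra.
Import Order.TTheory GRing.Theory Num.Theory.
Local Open Scope ring_scope.

Lemma vdotE {R : realType} (a b : 'rV[R]_3) :
  vdot a b = a ord0 (inord 0) * b ord0 (inord 0) + a ord0 (inord 1) * b ord0 (inord 1)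
           + a ord0 (inord 2) * b ord0 (inord 2).
Proof.
rewrite /vdot mxE !big_ord_recl big_ord0 !mxE addr0 addrA.
have -> : (lift ord0 (lift ord0 ord0) : 'I_3) = inord 2 by apply/val_inj; rewrite /= inordK.
have -> : (lift ord0 ord0 : 'I_3) = inord 1 by apply/val_inj; rewrite /= inordK.
have -> : (ord0 : 'I_3) = inord 0 by apply/val_inj; rewrite /= inordK.
by [].
Qed.

Lemma crossE0 {R : realType} (a b : 'rV[R]_3) : vcross a b ord0 (inord 0) =
  a ord0 (inord 1) * b ord0 (inord 2) - a ord0 (inord 2) * b ord0 (inord 1).
Proof. by rewrite /vcross mxE inordK. Qed.
Lemma crossE1 {R : realType} (a b : 'rV[R]_3) : vcross a b ord0 (inord 1) =
  a ord0 (inord 2) * b ord0 (inord 0) - a ord0 (inord 0) * b ord0 (inord 2).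
Proof. by rewrite /vcross mxE inordK. Qed.
Lemma crossE2 {R : realType} (a b : 'rV[R]_3) : vcross a b ord0 (inord 2) =
  a ord0 (inord 0) * b ord0 (inord 1) - a ord0 (inord 1) * b ord0 (inord 0).
Proof. by rewrite /vcross mxE inordK. Qed.

Ltac vexp := rewrite ?vdotE ?crossE0 ?crossE1 ?crossE2 ?mxE; ring.

Lemma vdotC {R : realType} (a b : 'rV[R]_3) : vdot a b = vdot b a.
Proof. vexp. Qed.
Lemma vdotDl {R : realType} (a b c : 'rV[R]_3) : vdot (a + b) c = vdot a c + vdot b c.
Proof. vexp. Qed.
Lemma vdotZl {R : realType} (s : R) (a c : 'rV[R]_3) : vdot (s *: a) c = s * vdot a c.
Proof. vexp. Qed.
Lemma vdotNl {R : realType} (a c : 'rV[R]_3) : vdot (- a) c = - vdot a c.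
Proof. vexp. Qed.
Lemma vcross_swap {R : realType} (a b c : 'rV[R]_3) :
  vdot (vcross a b) c = - vdot (vcross a c) b.
Proof. vexp. Qed.
Lemma vcross_bb {R : realType} (a b : 'rV[R]_3) : vdot (vcross a b) b = 0.
Proof. vexp. Qed.
Lemma vcross_aa {R : realType} (a b : 'rV[R]_3) : vdot (vcross a b) a = 0.
Proof. vexp. Qed.
Lemma vcrossDr {R : realType} (a b c p : 'rV[R]_3) :
  vdot (vcross a (b + c)) p = vdot (vcross a b) p + vdot (vcross a c) p.
Proof. vexp. Qed.
Lemma vcrossZr {R : realType} (s : R) (a b p : 'rV[R]_3) :
  vdot (vcross a (s *: b)) p = s * vdot (vcross a b) p.
Proof. vexp. Qed.
Lemma vcrossNr {R : realType} (a b p : 'rV[R]_3) :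
  vdot (vcross a (- b)) p = - vdot (vcross a b) p.
Proof. vexp. Qed.
Lemma vdot_ge0 {R : realType} (a : 'rV[R]_3) : 0 <= vdot a a.
Proof. rewrite vdotE; nra. Qed.
Lemma vdot_lagrange {R : realType} (a b : 'rV[R]_3) :
  vdot a b ^+ 2 <= vdot a a * vdot b b.
Proof.
rewrite !vdotE.
set a0 := a _ (inord 0); set a1 := a _ (inord 1); set a2 := a _ (inord 2).
set b0 := b _ (inord 0); set b1 := b _ (inord 1); set b2 := b _ (inord 2).
have -> : (a0 * a0 + a1 * a1 + a2 * a2) * (b0 * b0 + b1 * b1 + b2 * b2) =
  (a0 * b0 + a1 * b1 + a2 * b2) ^+ 2 + ((a0*b1 - a1*b0)^+2 + (a0*b2-a2*b0)^+2 + (a1*b2-a2*b1)^+2) by ring.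
by rewrite lerDl !addr_ge0 ?sqr_ge0.
Qed.

Lemma lipC {R : realType} {d : nat} {M : mesh R d} (u v : fe M) : lip u v = lip v u.
Proof. by apply eq_bigr => z _; rewrite vdotC. Qed.
Lemma lipDl {R : realType} {d : nat} {M : mesh R d} (u v w : fe M) :
  lip (u + v) w = lip u w + lip v w.
Proof. by rewrite /lip -big_split; apply eq_bigr => z _; rewrite ffunE vdotDl mulrDr. Qed.
Lemma lipZl {R : realType} {d : nat} {M : mesh R d} (s : R) (u w : fe M) :
  lip (s *: u) w = s * lip u w.
Proof.
by rewrite /lip mulr_sumr; apply eq_bigr => z _; rewrite ffunE vdotZl mulrCA.
Qed.
Lemma lipNl {R : realType} {d : nat} {M : mesh R d} (u w : fe M) : lip (- u) w = - lip u w.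
Proof.
by rewrite /lip -sumrN; apply eq_bigr => z _; rewrite ffunE vdotNl mulrN.
Qed.
Lemma lipBl {R : realType} {d : nat} {M : mesh R d} (u v w : fe M) :
  lip (u - v) w = lip u w - lip v w.
Proof. by rewrite lipDl lipNl. Qed.
Lemma lipDr {R : realType} {d : nat} {M : mesh R d} (u v w : fe M) :
  lip w (u + v) = lip w u + lip w v.
Proof. by rewrite !(lipC w) lipDl. Qed.
Lemma lipZr {R : realType} {d : nat} {M : mesh R d} (s : R) (u w : fe M) :
  lip w (s *: u) = s * lip w u.
Proof. by rewrite !(lipC w) lipZl. Qed.
Lemma lipNr {R : realType} {d : nat} {M : mesh R d} (u w : fe M) : lip w (- u) = - lip w u.
Proof. by rewrite !(lipC w) lipNl. Qed.
Lemma lipBr {R : realType} {d : nat} {M : mesh R d} (u v w : fe M) :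
  lip w (u - v) = lip w u - lip w v.
Proof. by rewrite lipDr lipNr. Qed.

Lemma lip_cross_swap {R : realType} {d : nat} {M : mesh R d} (a b c : fe M) :
  lip (fcross a b) c = - lip (fcross a c) b.
Proof.
by rewrite /lip -sumrN; apply eq_bigr => z _; rewrite !ffunE vcross_swap mulrN.
Qed.
Lemma lip_cross_bb {R : realType} {d : nat} {M : mesh R d} (a b : fe M) :
  lip (fcross a b) b = 0.
Proof. by rewrite /lip big1 // => z _; rewrite !ffunE vcross_bb mulr0. Qed.
Lemma lip_cross_aa {R : realType} {d : nat} {M : mesh R d} (a b : fe M) :
  lip (fcross a b) a = 0.
Proof. by rewrite /lip big1 // => z _; rewrite !ffunE vcross_aa mulr0. Qed.
Lemma lip_crossDr {R : realType} {d : nat} {M : mesh R d} (a b c p : fe M) :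
  lip (fcross a (b + c)) p = lip (fcross a b) p + lip (fcross a c) p.
Proof.
by rewrite /lip -big_split; apply eq_bigr => z _; rewrite !ffunE vcrossDr mulrDr.
Qed.
Lemma lip_crossZr {R : realType} {d : nat} {M : mesh R d} (s : R) (a b p : fe M) :
  lip (fcross a (s *: b)) p = s * lip (fcross a b) p.
Proof.
by rewrite /lip mulr_sumr; apply eq_bigr => z _; rewrite !ffunE vcrossZr mulrCA.
Qed.
Lemma lip_crossNr {R : realType} {d : nat} {M : mesh R d} (a b p : fe M) :
  lip (fcross a (- b)) p = - lip (fcross a b) p.
Proof.
by rewrite /lip -sumrN; apply eq_bigr => z _; rewrite !ffunE vcrossNr mulrN.
Qed.
Lemma lip_crossBr {R : realType} {d : nat} {M : mesh R d} (a b c p : fe M) :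
  lip (fcross a (b - c)) p = lip (fcross a b) p - lip (fcross a c) p.
Proof. by rewrite lip_crossDr lip_crossNr. Qed.

Lemma lweight_ge0 {R : realType} {d : nat} {M : mesh R d} (z : vtx M) : 0 <= lweight z.
Proof.
apply: sumr_ge0 => T _; apply: divr_ge0 => //; apply: divr_ge0 => //.
Qed.

Lemma lip_ge0 {R : realType} {d : nat} {M : mesh R d} (u : fe M) : 0 <= lip u u.
Proof. by apply: sumr_ge0 => z _; rewrite mulr_ge0 ?lweight_ge0 ?vdot_ge0. Qed.

Lemma lnorm_sq {R : realType} {d : nat} {M : mesh R d} (u : fe M) : lnorm u ^+ 2 = lip u u.
Proof. by rewrite /lnorm sqr_sqrtr // lip_ge0. Qed.

Lemma lweight_gt0 {R : realType} {d : nat} {M : mesh R d} (z : vtx M) :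
  conforming_mesh M -> 0 < lweight z.
Proof.
case=> _ Hdet Hz _ _; have [T HT] := Hz z.
rewrite /lweight (bigD1 T) //= ltr_wpDr //.
  by apply: sumr_ge0 => T' _; apply: divr_ge0 => //; apply: divr_ge0.
apply: divr_gt0 => //; apply: divr_gt0; last by rewrite ltr0n fact_gt0.
by rewrite normr_gt0.
Qed.

Lemma dot_rowC {R : realType} {n : nat} (a b : 'rV[R]_n) :
  (a *m b^T) ord0 ord0 = (b *m a^T) ord0 ord0.
Proof. by rewrite !mxE; apply eq_bigr => j _; rewrite !mxE mulrC. Qed.

Lemma stiff_sym {R : realType} {d : nat} {M : mesh R d} (z z' : vtx M) :
  stiff z z' = stiff z' z.
Proof. by apply eq_bigr => T _; rewrite dot_rowC. Qed.

Lemma sum_ind {R : realType} {n : nat} (e : 'I_n) :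
  \sum_(z < n) (((e == z) : nat)%:R : R) = 1.
Proof.
rewrite (bigD1 e) //= eqxx big1 ?addr0 // => z Hz.
by rewrite eq_sym (negbTE Hz).
Qed.

Lemma grad_sum {R : realType} {d : nat} {M : mesh R d} (T : simp M) :
  \sum_(z : vtx M) grad_hat T z = 0.
Proof.
rewrite /grad_hat -mulmx_suml.
have -> : \sum_(z : vtx M) (\row_(j < d) (((elt M T (lift ord0 j) == z) : nat)%:R
                 - ((elt M T ord0 == z) : nat)%:R) : 'rV[R]_d) = 0.
  apply/rowP => j; rewrite summxE !mxE.
  under eq_bigr do rewrite mxE.
  by rewrite sumrB !sum_ind subrr.
by rewrite mul0mx.
Qed.

Lemma stiff_row0 {R : realType} {d : nat} {M : mesh R d} (z : vtx M) :
  \sum_(z' : vtx M) stiff z z' = 0.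
Proof.
rewrite /stiff exchange_big /= big1 // => T _.
rewrite -mulr_sumr.
have -> : \sum_(z' : vtx M) (grad_hat T z *m (grad_hat T z')^T) ord0 ord0
   = (grad_hat T z *m (\sum_(z' : vtx M) grad_hat T z')^T) ord0 ord0.
  by rewrite linear_sum /= mulmx_sumr summxE.
by rewrite grad_sum trmx0 mulmx0 mxE mulr0.
Qed.

Lemma gradipC {R : realType} {d : nat} {M : mesh R d} (u v : fe M) :
  gradip u v = gradip v u.
Proof.
rewrite /gradip exchange_big /=; apply eq_bigr => z _; apply eq_bigr => z' _.
by rewrite stiff_sym vdotC.
Qed.
Lemma gradipDl {R : realType} {d : nat} {M : mesh R d} (u v w : fe M) :
  gradip (u + v) w = gradip u w + gradip v w.
Proof.
rewrite /gradip -big_split; apply eq_bigr => z _; rewrite -big_split.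
by apply eq_bigr => z' _; rewrite ffunE vdotDl mulrDr.
Qed.
Lemma gradipZl {R : realType} {d : nat} {M : mesh R d} (s : R) (u w : fe M) :
  gradip (s *: u) w = s * gradip u w.
Proof.
rewrite /gradip mulr_sumr; apply eq_bigr => z _; rewrite mulr_sumr.
by apply eq_bigr => z' _; rewrite ffunE vdotZl mulrCA.
Qed.
Lemma gradipNl {R : realType} {d : nat} {M : mesh R d} (u w : fe M) :
  gradip (- u) w = - gradip u w.
Proof. by rewrite -scaleN1r gradipZl mulN1r. Qed.
Lemma gradipBl {R : realType} {d : nat} {M : mesh R d} (u v w : fe M) :
  gradip (u - v) w = gradip u w - gradip v w.
Proof. by rewrite gradipDl gradipNl. Qed.
Lemma gradipDr {R : realType} {d : nat} {M : mesh R d} (u v w : fe M) :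
  gradip w (u + v) = gradip w u + gradip w v.
Proof. by rewrite !(gradipC w) gradipDl. Qed.
Lemma gradipZr {R : realType} {d : nat} {M : mesh R d} (s : R) (u w : fe M) :
  gradip w (s *: u) = s * gradip w u.
Proof. by rewrite !(gradipC w) gradipZl. Qed.
Lemma gradipBr {R : realType} {d : nat} {M : mesh R d} (u v w : fe M) :
  gradip w (u - v) = gradip w u - gradip w v.
Proof. by rewrite !(gradipC w) gradipBl. Qed.

Lemma vdot_suml {R : realType} {I : finType} (F : I -> 'rV[R]_3) (b : 'rV[R]_3) :
  vdot (\sum_i F i) b = \sum_i vdot (F i) b.
Proof. by rewrite /vdot mulmx_suml summxE. Qed.

Lemma lip_Ph {R : realType} {d : nat} {M : mesh R d} (u phi : fe M) :
  conforming_mesh M -> lip (Ph_heff u) phi = - gradip u phi.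
Proof.
move=> HM; rewrite /lip /gradip -sumrN.
transitivity (\sum_(z : vtx M) - \sum_(z' : vtx M) stiff z z' * vdot (u z') (phi z)).
  apply eq_bigr => z _; rewrite ffunE vdotNl vdotZl mulrN mulrA mulfV ?mul1r;
    last by rewrite gt_eqF // lweight_gt0.
  by rewrite vdot_suml; congr (- _); apply eq_bigr => z' _; rewrite vdotZl.
rewrite !sumrN; congr (- _); rewrite exchange_big /=; apply eq_bigr => z _; apply eq_bigr => z' _.
by rewrite stiff_sym vdotC.
Qed.

Lemma dtK {R : realType} {d : nat} {M : mesh R d} (k : R) (a b : fe M) :
  k != 0 -> k *: dt k a b = a - b.
Proof. by move=> hk; rewrite /dt scalerA mulfV // scale1r. Qed.
Lemma midK {R : realType} {d : nat} {M : mesh R d} (a b : fe M) :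
  a + b = 2 *: mid a b.
Proof. by rewrite /mid scalerA mulfV ?scale1r // pnatr_eq0. Qed.
Lemma lipsq_diff {R : realType} {d : nat} {M : mesh R d} (a b : fe M) :
  lip a a - lip b b = lip (a + b) (a - b).
Proof. rewrite lipDl !lipBr (lipC b a); ring. Qed.
Lemma gradsq_diff {R : realType} {d : nat} {M : mesh R d} (a b : fe M) :
  gradip a a - gradip b b = gradip (a + b) (a - b).
Proof. rewrite gradipDl !gradipBr (gradipC b a); ring. Qed.

Lemma energy_step {R : realType} {d : nat} {M : mesh R d} (k : R) (m1 m0 : fe M) :
  conforming_mesh M -> k != 0 ->
  energy m1 = energy m0 - k * lip (dt k m1 m0) (Ph_heff (mid m1 m0)).
Proof.
move=> HM hk.
have : gradip m1 m1 - gradip m0 m0 = 2 * k * gradip (mid m1 m0) (dt k m1 m0).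
  by rewrite gradsq_diff midK -(dtK _ _ _ hk) gradipZl gradipZr mulrA.
rewrite lipC lip_Ph // /energy => h; lra.
Qed.

Lemma lip_step {R : realType} {d : nat} {M : mesh R d} (k : R) (w1 w0 : fe M) :
  k != 0 ->
  lip w1 w1 = lip w0 w0 + 2 * k * lip (dt k w1 w0) (mid w1 w0).
Proof.
move=> hk.
have : lip w1 w1 - lip w0 w0 = 2 * k * lip (mid w1 w0) (dt k w1 w0).
  by rewrite lipsq_diff midK -(dtK _ _ _ hk) lipZl lipZr mulrA.
rewrite (lipC (mid _ _)) => h; lra.
Qed.

Lemma part2 {R : realType} {d : nat} {M : mesh R d} (alpha tau k : R) :
  conforming_mesh M -> 0 < k ->
   forall (v0 : fe M) (m w : nat -> fe M),
   amm_generated alpha tau k v0 m w ->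
   forall i : nat,
     Jh tau (m i.+1) (w i.+1) + alpha * k * lnorm (dt k (m i.+1) (m i)) ^+ 2
     = Jh tau (m i) (w i).
Proof.
move=> HM hk v0 m w [_ [_ [_ H]]] i.
have hk0 : k != 0 by rewrite gt_eqF.
move: (H i) => /= [_ _ H1 H2].
set m0 := m i in H1 H2 *; set m1 := m i.+1 in H1 H2 *.
set w0 := w i in H1 H2 *; set w1 := w i.+1 in H1 H2 *.
set D := dt k m1 m0 in H1 H2 *; set Dw := dt k w1 w0 in H1 H2 *.
set mh := mid m1 m0 in H1 H2 *; set wh := mid w1 w0 in H1 H2 *.
set P := Ph_heff mh in H1 H2 *.
have T : tau * lip Dw wh = lip D P - alpha * lip D D.
  rewrite H2 lip_cross_bb subr0 lip_cross_swap [lip (fcross mh D) wh]lip_cross_swap.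
  by rewrite -!H1.
rewrite /Jh !lnorm_sq (energy_step k m1 m0 HM hk0) (lip_step k w1 w0 hk0) -/D -/mh -/P -/Dw -/wh.
rewrite (_ : tau / 2 * (lip w0 w0 + 2 * k * lip Dw wh) = tau / 2 * lip w0 w0 + k * (tau * lip Dw wh)); last by field.
rewrite T (lipC D P); ring.
Qed.

Lemma part3 {R : realType} {d : nat} {M : mesh R d} (alpha tau k : R) :
  conforming_mesh M -> 0 < k ->
   forall (eps : R) (v0 : fe M) (m w : nat -> fe M) (u z : nat -> nat -> fe M)
          (ell : nat -> nat),
   0 < eps -> lamm_generated alpha tau k eps v0 m w u z ell ->
   forall i : nat,
     let mh := mid (m i.+1) (m i) in
     Jh tau (m i.+1) (w i.+1) + alpha * k * lnorm (dt k (m i.+1) (m i)) ^+ 2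
     + k * lip (fcross mh (lamm_residual z ell i))
               (Ph_heff mh - alpha *: dt k (m i.+1) (m i))
     = Jh tau (m i) (w i).
Proof.
move=> HM hk eps v0 m w u z ell _ [_ [_ [_ H]]] i /=.
have hk0 : k != 0 by rewrite gt_eqF.
move: (H i) => [_ Hl _ _ [Hm Hw]].
move: (Hl (ell i) (leqnn _)) => [H1 H2].
rewrite /lamm_residual.
set m0 := m i in H1 H2 Hm Hw *; set m1 := m i.+1 in H1 H2 Hm Hw *.
set w0 := w i in H1 H2 Hm Hw *; set w1 := w i.+1 in H1 H2 Hm Hw *.
set uu := u i (ell i).+1 in H1 H2 Hm Hw *.
set zz := z i (ell i).+1 in H1 H2 Hm Hw *.
set zl := z i (ell i) in H1 H2 Hm Hw *.
set r := zz - zl.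
have h2 : (2 : R) != 0 by rewrite pnatr_eq0.
have Emh : mid m1 m0 = uu by rewrite /mid Hm subrK scalerA mulVf ?scale1r.
have Ewh : mid w1 w0 = zz by rewrite /mid Hw subrK scalerA mulVf ?scale1r.
set D := dt k m1 m0; set Dw := dt k w1 w0.
set P := Ph_heff uu.
have Ezl : zl = zz - r by rewrite /r opprB addrC subrK.
have F1 : forall phi, lip D phi = - lip (fcross uu zz) phi + lip (fcross uu r) phi.
  move=> phi; apply: (mulfI hk0).
  rewrite -lipZl dtK // Hm !lipBl lipZl.
  have := H1 phi; rewrite Ezl lip_crossBr => h; lra.
have kY : k * lip Dw zz = 2 * lip zz zz - 2 * lip w0 zz.
  by rewrite -lipZl dtK // Hw !lipBl lipZl; ring.
have kZ : k * lip (fcross uu zz) D = - 2 * lip (fcross uu zz) m0.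
  by rewrite -lipZr dtK // Hm !lipBr lipZr lip_cross_aa; ring.
have T : tau * lip Dw zz = lip D P - lip (fcross uu r) P
                           - alpha * lip D D + alpha * lip (fcross uu r) D.
  apply: (mulfI hk0); rewrite mulrCA kY.
  have H2' := H2 zz; rewrite lip_cross_bb -/P in H2'.
  rewrite (_ : tau * (2 * lip zz zz - 2 * lip w0 zz) =
     k * lip (fcross uu P) zz + 2 * alpha * lip (fcross uu m0) zz); last by lra.
  rewrite lip_cross_swap (lip_cross_swap uu m0) (F1 P) (F1 D).
  set X := lip (fcross uu r) D.
  rewrite (_ : k * (- lip (fcross uu zz) P + lip (fcross uu r) P - lip (fcross uu r) P -
   alpha * (- lip (fcross uu zz) D + X) + alpha * X) =
   - k * lip (fcross uu zz) P + alpha * (k * lip (fcross uu zz) D)); last by ring.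
  rewrite kZ; ring.
rewrite /Jh !lnorm_sq (energy_step k m1 m0 HM hk0) (lip_step k w1 w0 hk0) Emh Ewh.
rewrite -/D -/Dw -/P lipBr lipZr.
rewrite (_ : tau / 2 * (lip w0 w0 + 2 * k * lip Dw zz) = tau / 2 * lip w0 w0 + k * (tau * lip Dw zz)); last by field.
rewrite T (lipC D P); ring.
Qed.

Lemma vdot_sub_sq {R : realType} (a b : 'rV[R]_3) :
  vdot (a - b) (a - b) = vdot a a + vdot b b - 2 * vdot a b.
Proof. vexp. Qed.
Lemma vdot_comb {R : realType} (s t : R) (a b : 'rV[R]_3) :
  vdot (s *: a - t *: b) (s *: a - t *: b)
  = s ^+ 2 * vdot a a + t ^+ 2 * vdot b b - 2 * s * t * vdot a b.
Proof. vexp. Qed.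
Lemma vdot_add_sq {R : realType} (k : R) (a b : 'rV[R]_3) :
  vdot (a + k *: b) (a + k *: b) = vdot a a + 2 * k * vdot a b + k ^+ 2 * vdot b b.
Proof. vexp. Qed.
Lemma vdot_00 {R : realType} (a : 'rV[R]_3) : vdot (a - a) (a - a) = 0.
Proof. vexp. Qed.

Lemma gradip_form {R : realType} {d : nat} {M : mesh R d} (u : fe M) :
  gradip u u = - 2^-1 * \sum_(z : vtx M) \sum_(z' : vtx M)
                          stiff z z' * vdot (u z - u z') (u z - u z').
Proof.
have e1 : \sum_(z : vtx M) \sum_(z' : vtx M) stiff z z' * vdot (u z) (u z) = 0.
  by apply: big1 => z _; rewrite -mulr_suml stiff_row0 mul0r.
have e2 : \sum_(z : vtx M) \sum_(z' : vtx M) stiff z z' * vdot (u z') (u z') = 0.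
  rewrite exchange_big /=; apply: big1 => z' _; rewrite -mulr_suml.
  under eq_bigr do rewrite stiff_sym.
  by rewrite stiff_row0 mul0r.
have e3 : \sum_(z : vtx M) \sum_(z' : vtx M) stiff z z' * vdot (u z - u z') (u z - u z')
   = \sum_(z : vtx M) \sum_(z' : vtx M) stiff z z' * vdot (u z) (u z)
   + \sum_(z : vtx M) \sum_(z' : vtx M) stiff z z' * vdot (u z') (u z')
   - 2 * gradip u u.
  rewrite /gradip mulr_sumr -big_split -sumrB /=; apply eq_bigr => z _.
  rewrite mulr_sumr -big_split -sumrB /=; apply eq_bigr => z' _.
  rewrite vdot_sub_sq; ring.
rewrite e3 e1 e2; by field.
Qed.

Lemma vnorm_sq {R : realType} (a : 'rV[R]_3) : vnorm a ^+ 2 = vdot a a.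
Proof. by rewrite /vnorm sqr_sqrtr // vdot_ge0. Qed.
Lemma vnorm_ge0 {R : realType} (a : 'rV[R]_3) : 0 <= vnorm a.
Proof. exact: sqrtr_ge0. Qed.

Lemma proj_lip {R : realType} (a b : 'rV[R]_3) :
  1 <= vdot a a -> 1 <= vdot b b ->
  vdot ((vnorm a)^-1 *: a - (vnorm b)^-1 *: b) ((vnorm a)^-1 *: a - (vnorm b)^-1 *: b)
  <= vdot (a - b) (a - b).
Proof.
move=> ha hb; rewrite vdot_comb vdot_sub_sq.
have hp := vnorm_sq a; have hq := vnorm_sq b.
have hp0 := vnorm_ge0 a; have hq0 := vnorm_ge0 b.
set p := vnorm a in hp hp0 *; set q := vnorm b in hq hq0 *.
set A := vdot a a in ha hp *; set B := vdot b b in hb hq *.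
set c := vdot a b.
have hL : c ^+ 2 <= A * B by exact: vdot_lagrange.
have p1 : 1 <= p by nra.
have q1 : 1 <= q by nra.
have pq0 : 0 < p * q by nra.
have hc : c <= p * q.
  rewrite -hp -hq in hL.
  have : c ^+ 2 <= (p * q) ^+ 2 by rewrite exprMn.
  nra.
have pn : p != 0 by rewrite gt_eqF //; lra.
have qn : q != 0 by rewrite gt_eqF //; lra.
have e1 : p^-1 ^+ 2 * A = 1 by rewrite -hp exprVn mulVf // expf_neq0.
have e2 : q^-1 ^+ 2 * B = 1 by rewrite -hq exprVn mulVf // expf_neq0.
rewrite e1 e2.
set s := p^-1 * q^-1.
have hs : p * q * s = 1 by rewrite /s mulrACA mulfV // mulfV // mulr1.
have s0 : 0 < s by rewrite /s mulr_gt0 // invr_gt0; lra.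
have s1 : s <= 1.
  have : s * (p * q) = 1 by rewrite mulrC.
  nra.
have h1 : c * (1 - s) <= p * q * (1 - s) by rewrite ler_wpM2r // subr_ge0.
have h3 : 0 <= (p - q) ^+ 2 by exact: sqr_ge0.
rewrite (_ : 2 * p^-1 * q^-1 * c = 2 * s * c); last by rewrite /s; ring.
rewrite -hp -hq; nra.
Qed.

Lemma energy_proj {R : realType} {d : nat} {M : mesh R d} (U : fe M) :
  angle_condition M -> (forall z, 1 <= vdot (U z) (U z)) ->
  energy [ffun z => (vnorm (U z))^-1 *: U z] <= energy U.
Proof.
move=> HA HU; rewrite /energy ler_pM2r ?invr_gt0 ?ltr0n //.
rewrite !gradip_form; apply: ler_wnM2l; first by rewrite oppr_le0 invr_ge0 ler0n.
apply: ler_sum => z _; apply: ler_sum => z' _; rewrite !ffunE.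
have [<-|hne] := eqVneq z z'; first by rewrite !vdot_00.
by apply: ler_wnM2l; [exact: HA | exact: proj_lip].
Qed.

Lemma vnorm1 {R : realType} (a : 'rV[R]_3) : vnorm a = 1 -> vdot a a = 1.
Proof. by move=> h; rewrite -vnorm_sq h expr1n. Qed.

Lemma part1 {R : realType} {d : nat} {M : mesh R d} (alpha tau k : R) :
  conforming_mesh M -> 0 < k ->
   angle_condition M ->
   forall m v : nat -> fe M, tps_generated alpha tau k m v ->
   forall i : nat,
     Jh tau (m i.+1) (v i.+1) + alpha * k * lnorm (v i.+1) ^+ 2
     + tau * k ^+ 2 / 2 * lnorm (dt k (v i.+1) (v i)) ^+ 2
     + k ^+ 2 / 2 * gradip (v i.+1) (v i.+1)
     <= Jh tau (m i) (v i).
Proof.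
move=> HM hk HA m v [H0m [_ H]].
have hk0 : k != 0 by rewrite gt_eqF.
have HUge : forall i z, vdot (m i z) (m i z) = 1 ->
    1 <= vdot (m i z + k *: v i.+1 z) (m i z + k *: v i.+1 z).
  move=> i z h1; case: (H i) => Hk _ _.
  rewrite vdot_add_sq h1 Hk mulr0 addr0 lerDl.
  by rewrite mulr_ge0 ?sqr_ge0 ?vdot_ge0.
have Hunit : forall i z, vdot (m i z) (m i z) = 1.
  elim=> [|i IH] z; first exact: vnorm1.
  case: (H i) => _ _ ->; rewrite ffunE vdotZl vdotC vdotZl mulrA.
  have h1 := HUge i z (IH z).
  set a := m i z + k *: v i.+1 z in h1 *.
  have hp0 := vnorm_ge0 a; rewrite -vnorm_sq in h1 *.
  have hp : vnorm a != 0 by rewrite gt_eqF //; nra.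
  by field.
move=> i.
case: (H i) => Hk Hphi Hm.
set m0 := m i in Hk Hphi Hm *; set v1 := v i.+1 in Hk Hphi Hm *.
set v0 := v i in Hphi *.
set U : fe M := m0 + k *: v1.
have EU : m i.+1 = [ffun z => (vnorm (U z))^-1 *: U z].
  by rewrite Hm; apply/ffunP => z; rewrite !ffunE.
have HE1 : energy (m i.+1) <= energy U.
  rewrite EU; apply: energy_proj => // z; rewrite /U !ffunE; exact: HUge.
have HEU : energy U = energy m0 + k * gradip m0 v1 + k ^+ 2 / 2 * gradip v1 v1.
  rewrite /energy /U gradipDl !gradipDr !gradipZl !gradipZr (gradipC v1 m0); by field.
set Dv := dt k v1 v0.
have Ev0 : v0 = v1 - k *: Dv by rewrite dtK // opprB addrC subrK.
have HL0 : lip v0 v0 = lip v1 v1 - 2 * k * lip Dv v1 + k ^+ 2 * lip Dv Dv.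
  rewrite {1 2}Ev0 !lipBl !lipBr !lipZl !lipZr (lipC v1 (v1 - v0)); by field.
have H3 := Hphi v1 Hk.
rewrite lip_cross_bb !lip_Ph // in H3.
rewrite /Jh !lnorm_sq.
suff Heq : energy U + tau / 2 * lip v1 v1 + alpha * k * lip v1 v1 +
     tau * k ^+ 2 / 2 * lip Dv Dv + k ^+ 2 / 2 * gradip v1 v1
     = energy m0 + tau / 2 * lip v0 v0 by lra.
rewrite HEU HL0.
have H3k : k * (tau * lip Dv v1) + k * (alpha * lip v1 v1) + k * (k * gradip v1 v1)
           = - k * gradip m0 v1.
  rewrite -!mulrDr; have -> : - k * gradip m0 v1 = k * (- gradip m0 v1) by ring.
  congr (_ * _); rewrite -H3; ring.
lra.
Qed.

Theorem proposition3p6 (R : realType) (d : nat) (M : mesh R d)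
    (alpha tau k : R) :
  (d = 2 \/ d = 3)%N -> conforming_mesh M ->
  0 < alpha -> 0 < tau -> 0 < k ->
  [/\
   (* (i) tangent plane scheme *)
   angle_condition M ->
   forall m v : nat -> fe M, tps_generated alpha tau k m v ->
   forall i : nat,
     Jh tau (m i.+1) (v i.+1) + alpha * k * lnorm (v i.+1) ^+ 2
     + tau * k ^+ 2 / 2 * lnorm (dt k (v i.+1) (v i)) ^+ 2
     + k ^+ 2 / 2 * gradip (v i.+1) (v i.+1)
     <= Jh tau (m i) (v i),
   (* (ii) nonlinear angular momentum method *)
   forall (v0 : fe M) (m w : nat -> fe M),
   amm_generated alpha tau k v0 m w ->
   forall i : nat,
     Jh tau (m i.+1) (w i.+1) + alpha * k * lnorm (dt k (m i.+1) (m i)) ^+ 2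
     = Jh tau (m i) (w i)
 & (* (iii) linearized angular momentum method *)
   forall (eps : R) (v0 : fe M) (m w : nat -> fe M) (u z : nat -> nat -> fe M)
          (ell : nat -> nat),
   0 < eps -> lamm_generated alpha tau k eps v0 m w u z ell ->
   forall i : nat,
     let mh := mid (m i.+1) (m i) in
     Jh tau (m i.+1) (w i.+1) + alpha * k * lnorm (dt k (m i.+1) (m i)) ^+ 2
     + k * lip (fcross mh (lamm_residual z ell i))
               (Ph_heff mh - alpha *: dt k (m i.+1) (m i))
     = Jh tau (m i) (w i)].
Proof.
move=> _ HM _ _ hk; split.
- exact: part1.
- exact: part2.
- exact: part3.
Qed.
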